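(* Let $n\ge2$ and define $\psi:\mathcal K_0^n\times[0,1]\to\mathcal K_0^n$ by $\psi(A,0)=A$ and $\psi(A,t)=(A+t\mathbb B)\cap\frac{1-t}{t}\mathbb B$ for $t\in(0,1]$. Then $\psi$ is continuous with respect to $d_{AW}$, and for every $t\in[\frac{\sqrt5-1}{2},1)$ and every $A\in\mathcal K_0^n$ one has $\psi(A,t)=\frac{1-t}{t}\mathbb B$.
   Context: $\mathbb B$ is the closed Euclidean unit ball of $\mathbb R^n$. $\mathcal K_0^n$ is the family of closed convex subsets of $\mathbb R^n$ containing $0$, with the Attouch–Wets metric $d_{AW}(A,K)=\sup_{j\in\mathbb N}\min\{\frac1j,\sup_{\|x\|<j}|d(x,A)-d(x,K)|\}$, $d(x,A)=\inf_{a\in A}\|x-a\|$. *)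

(* Defs.v *)
From HB Require Import structures.
From mathcomp Require Import all_boot all_order all_algebra.
From mathcomp Require Import all_classical all_reals all_analysis.
Set Implicit Arguments. Unset Strict Implicit. Unset Printing Implicit Defensive.
Import Order.TTheory GRing.Theory Num.Theory.
Import numFieldNormedType.Exports.
Local Open Scope classical_set_scope.
Local Open Scope ring_scope.

Section Defs.
Variables (R : realType) (n : nat).
Implicit Types (A K S : set 'rV[R]_n) (x : 'rV[R]_n).

Definition enorm x : R := Num.sqrt (\sum_(i < n) x ord0 i ^+ 2).

Definition eball : set 'rV[R]_n := [set x | enorm x <= 1].

Definition sscale (r : R) S : set 'rV[R]_n := [set r *: s | s in S].
Definition msum A K : set 'rV[R]_n :=
  [set z | exists a, A a /\ exists b, K b /\ z = a + b].

Definition convexset A : Prop :=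
  forall x y (t : R), A x -> A y -> 0 <= t <= 1 -> A (t *: x + (1 - t) *: y).

Definition K0 A : Prop := closed A /\ convexset A /\ A 0.

Definition edist x A : R := inf [set enorm (x - a) | a in A].

(** Attouch-Wets metric (j ranges over positive naturals j.+1). *)
Definition dAW A K : R :=
  sup [set Num.min (j.+1%:R)^-1
         (sup [set `|edist x A - edist x K| | x in [set x | enorm x < j.+1%:R]])
       | j in [set: nat]].

Definition psi A (t : R) : set 'rV[R]_n :=
  if t == 0 then A else msum A (sscale t eball) `&` sscale ((1 - t) / t) eball.

End Defs.

(* Main.v *)
Require Import Defs.
From HB Require Import structures.
From mathcomp Require Import all_boot all_order all_algebra.
From mathcomp Require Import all_classical all_reals all_analysis.
From mathcomp Require Import ring lra.
Import Order.TTheory GRing.Theory Num.Theory.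
Import numFieldNormedType.Exports.
Local Open Scope classical_set_scope.
Local Open Scope ring_scope.
Set Implicit Arguments.

Section Norm.
Variables (R : realType) (n : nat).
Local Notation V := 'rV[R]_n.
Local Notation N := (@enorm R n).

Definition sq (x : V) : R := \sum_(i < n) x ord0 i ^+ 2.
Definition dot (x y : V) : R := \sum_(i < n) x ord0 i * y ord0 i.

Lemma sq_ge0 x : 0 <= sq x.
Proof. by apply: sumr_ge0 => i _; rewrite sqr_ge0. Qed.

Lemma N_ge0 x : 0 <= N x.
Proof. exact: sqrtr_ge0. Qed.

Lemma N_sq x : N x ^+ 2 = sq x.
Proof. by rewrite /enorm sqr_sqrtr // sq_ge0. Qed.

Lemma sqD x y : sq (x + y) = sq x + 2 * dot x y + sq y.
Proof.
rewrite /sq /dot mulr_sumr -!big_split /=; apply: eq_bigr => i _.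
rewrite !mxE; ring.
Qed.

Lemma sq_eq0 x : sq x = 0 -> x = 0.
Proof.
move=> /eqP; rewrite psumr_eq0; last by move=> i _; rewrite sqr_ge0.
move=> /allP H; apply/matrixP => i j; rewrite (ord1 i) mxE.
by apply/eqP; rewrite -sqrf_eq0; apply: H; rewrite mem_index_enum.
Qed.

Lemma N_eq0 x : N x = 0 -> x = 0.
Proof. by move=> h; apply: sq_eq0; rewrite -N_sq h expr0n. Qed.

Lemma N0 : N 0 = 0.
Proof. by rewrite /enorm big1 ?sqrtr0 // => i _; rewrite mxE expr0n. Qed.

Lemma sqZ a x : sq (a *: x) = a ^+ 2 * sq x.
Proof. by rewrite /sq mulr_sumr; apply: eq_bigr => i _; rewrite mxE exprMn. Qed.

Lemma NZ a x : N (a *: x) = `|a| * N x.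
Proof. by rewrite /enorm -/(sq _) sqZ sqrtrM ?sqr_ge0 // sqrtr_sqr. Qed.

Lemma NN x : N (- x) = N x.
Proof. by rewrite -scaleN1r NZ normrN normr1 mul1r. Qed.

Lemma NB x y : N (x - y) = N (y - x).
Proof. by rewrite -NN opprB. Qed.

Lemma dot_le x y : dot x y <= N x * N y.
Proof.
have key : 0 <= \sum_(i < n) (N y * x ord0 i - N x * y ord0 i) ^+ 2.
  by apply: sumr_ge0 => i _; rewrite sqr_ge0.
have E : \sum_(i < n) (N y * x ord0 i - N x * y ord0 i) ^+ 2 =
   2 * (N x * N y) * (N x * N y - dot x y).
  transitivity (N y ^+ 2 * sq x - 2 * (N x * N y) * dot x y + N x ^+ 2 * sq y).
    rewrite /sq /dot !mulr_sumr -sumrN -!big_split /=; apply: eq_bigr => i _.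
    ring.
  rewrite -!N_sq; ring.
have [h0|hp] := eqVneq (N x * N y) 0.
  rewrite h0; move: h0 => /eqP; rewrite mulf_eq0 => /orP[] /eqP /N_eq0 ->;
    rewrite /dot big1 // => i _; rewrite mxE ?mul0r ?mulr0 //.
have pos : 0 < N x * N y by rewrite lt_def hp mulr_ge0 ?N_ge0.
move: key; rewrite E pmulr_rge0 ?subr_ge0 // mulr_gt0 //.
Qed.

Lemma NT x y : N (x + y) <= N x + N y.
Proof.
rewrite -(ler_pXn2r (n:=2)) ?nnegrE ?addr_ge0 ?N_ge0 //.
rewrite N_sq sqD sqrrD !N_sq lerD2r lerD2l; have := dot_le x y; lra.
Qed.

Lemma NTB x y z : N (x - z) <= N (x - y) + N (y - z).
Proof. have -> : x - z = (x - y) + (y - z) by rewrite addrA subrK.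
exact: NT. Qed.

End Norm.

Section Norm2.
Variables (R : realType) (n : nat).
Local Notation V := 'rV[R]_n.
Local Notation N := (@enorm R n).

Lemma coord_le_mx (x : V) i : `|x ord0 i| <= `|x|.
Proof.
rewrite [leRHS]/Num.norm /= mx_normrE; apply/bigmax_geP; right => /=.
by exists (ord0, i).
Qed.

Lemma coord_le_N (x : V) i : `|x ord0 i| <= N x.
Proof.
rewrite -(ler_pXn2r (n:=2)) ?nnegrE ?N_ge0 // N_sq real_normK ?num_real //.
rewrite /sq (bigD1 i) //= lerDl; apply: sumr_ge0 => j _; exact: sqr_ge0.
Qed.

Lemma mx_le_N (x : V) : `|x| <= N x.
Proof.
rewrite [leLHS]/Num.norm /= mx_normrE; apply: bigmax_le; first exact: N_ge0.
by move=> [i j] _ /=; rewrite (ord1 i); exact: coord_le_N.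
Qed.

Lemma N_le_mx (x : V) : N x <= n%:R * `|x| + `|x|.
Proof.
have h0 : 0 <= `|x| by [].
rewrite -(ler_pXn2r (n:=2)) ?nnegrE ?N_ge0 ?addr_ge0 ?mulr_ge0 // N_sq.
apply: (@le_trans _ _ (\sum_(i < n) `|x| ^+ 2)).
  apply: ler_sum => i _; rewrite -real_normK ?num_real //.
  by rewrite lerXn2r ?nnegrE // coord_le_mx.
rewrite sumr_const card_ord -mulr_natr.
have : 0 <= n%:R :> R by [].
move=> hn; nra.
Qed.

Lemma lip_cont (g : V -> R) C : 0 < C ->
  (forall x y, `|g x - g y| <= C * `|x - y|) -> continuous g.
Proof.
move=> C0 hg x; apply/(@cvgrPdist_lt _ _ _ (nbhs x) (nbhs_filter x)) => e e0.
have eC : 0 < e / C by rewrite divr_gt0.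
near=> y.
apply: le_lt_trans (hg x y) _.
rewrite -ltr_pdivlMl // mulrC.
near: y.
exact: (@cvgr_dist_lt _ _ _ (nbhs x) (nbhs_filter x) id x (@cvg_id _ _) (e / C) eC).
Unshelve. all: by end_near.
Qed.

Lemma N_cont : continuous N.
Proof.
apply: (@lip_cont _ (n%:R + 1)) => // x y.
apply: (@le_trans _ _ (N (x - y))).
  rewrite ler_norml; apply/andP; split.
    rewrite lerBrDl; have := NTB y x 0; rewrite !subr0 NB; lra.
  rewrite lerBlDl; have := NTB x y 0; rewrite !subr0; lra.
apply: le_trans (N_le_mx _) _; lra.
Qed.

End Norm2.

Section Dist.
Variables (R : realType) (n : nat).
Local Notation V := 'rV[R]_n.
Local Notation N := (@enorm R n).
Local Notation edist := (@Defs.edist R n).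
Implicit Types (A : set V).

Lemma ed_hlb x A : has_lbound [set N (x - a) | a in A].
Proof. by exists 0 => _ [a _ <-]; exact: N_ge0. Qed.

Lemma ed_le x A a : A a -> edist x A <= N (x - a).
Proof. by move=> Aa; apply: ge_inf (ed_hlb x A) _ _; exists a. Qed.

Lemma ed_ge0 x A : A !=set0 -> 0 <= edist x A.
Proof.
move=> [a Aa]; apply: lb_le_inf; first by exists (N (x - a)), a.
by move=> _ [b _ <-]; exact: N_ge0.
Qed.

Lemma ed_lt x A g : A !=set0 -> 0 < g ->
  exists2 a, A a & N (x - a) < edist x A + g.
Proof.
move=> [a0 Aa0] g0.
have ne : [set N (x - a) | a in A] !=set0 by exists (N (x - a0)), a0.
have := @inf_lt _ [set N (x - a) | a in A] (edist x A + g) ne.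
rewrite ltrDl => /(_ g0) [_ [a Aa <-] h].
by exists a.
Qed.

Lemma ed_lip x y A : A !=set0 -> edist x A <= edist y A + N (x - y).
Proof.
move=> [a0 Aa0]; rewrite -lerBlDr; apply: lb_le_inf.
  by exists (N (y - a0)), a0.
move=> _ [a Aa <-] /=.
have := @ed_le x A a Aa; have := NTB x y a; lra.
Qed.

Lemma ed_cont A : A !=set0 -> continuous (fun x : V => edist x A).
Proof.
move=> A0; apply: (@lip_cont _ _ _ (n%:R + 1)) => // x y.
apply: (@le_trans _ _ (N (x - y))).
  rewrite ler_norml; apply/andP; split.
    have := @ed_lip y x A A0; have := NB x y; lra.
  have := @ed_lip x y A A0; lra.
have := @N_le_mx _ _ (x - y); lra.
Qed.

Lemma Nx_cont (x : V) : continuous (fun a : V => N (x - a)).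
Proof.
apply: (@lip_cont _ _ _ (n%:R + 1)) => // a b.
apply: (@le_trans _ _ (N (a - b))).
  rewrite ler_norml; apply/andP; split.
    have := NTB x a b; lra.
  have := NTB x b a; have := NB a b; lra.
have := @N_le_mx _ _ (a - b); lra.
Qed.

Lemma closed_Nle (f : V -> R) r : continuous f -> closed [set a | f a <= r].
Proof.
move=> fc; have -> : [set a | f a <= r] = f @^-1` [set u | u <= r] by [].
by apply: preimage_closed; [move=> ? ?; exact: fc | exact: closed_le].
Qed.

Lemma nearest x A : closed A -> A !=set0 ->
  exists2 p, A p & forall a, A a -> N (x - p) <= N (x - a).
Proof.
move=> cA [a0 Aa0].
pose K := A `&` [set a | N (x - a) <= N (x - a0)].
have K0 : K !=set0 by exists a0; split => //=.
have cK : compact K.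
  apply: bounded_closed_compact; last first.
    by apply: closedI => //; apply: closed_Nle; exact: Nx_cont.
  rewrite /bounded_near.
  apply: filterS (@nbhs_pinfty_ge _ (N x + N (x - a0)) (num_real _)).
  move=> M hM a [_ /= Ka].
  apply: le_trans (@mx_le_N _ _ _) _.
  have -> : a = x - (x - a) by rewrite opprB addrC subrK.
  apply: le_trans (NTB x 0 _) _; rewrite sub0r NN subr0.
  apply: le_trans (lerD (lexx _) Ka) _; exact: hM.
have [p pK hp] := EVT_min_rV K0 cK (@continuous_subspaceT _ _ K _ (Nx_cont x)).
move: pK; rewrite inE => -[Ap Kp]; exists p => // a Aa.
have [Ka|nKa] := leP (N (x - a)) (N (x - a0)).
  by apply: hp; rewrite inE.
apply: le_trans Kp _; exact: ltW.
Qed.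

Lemma nearest_ed x A : closed A -> A !=set0 ->
  exists2 p, A p & N (x - p) = edist x A.
Proof.
move=> cA A0; have [p Ap hp] := nearest x cA A0; exists p => //.
apply/eqP; rewrite eq_le ed_le // andbT; apply: lb_le_inf.
  by exists (N (x - p)), p.
by move=> _ [a Aa <-]; exact: hp.
Qed.

End Dist.

Section Sets.
Variables (R : realType) (n : nat).
Local Notation V := 'rV[R]_n.
Local Notation N := (@enorm R n).
Local Notation edist := (@Defs.edist R n).
Local Notation msum := (@Defs.msum R n).
Implicit Types (A : set V).

Definition Bl (r : R) : set V := [set x | N x <= r].

Lemma ball_eq r : 0 <= r -> sscale r (@eball R n) = Bl r.
Proof.
move=> r0; apply/seteqP; split => x.
  by move=> [s /= hs <-]; rewrite /Bl /= NZ ger0_norm // ler_piMr.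
rewrite /Bl /= => hx.
case: (eqVneq r 0) hx => [->|rn0] hx.
  have : N x = 0 by apply/eqP; rewrite eq_le hx N_ge0.
  move=> /N_eq0 ->; exists 0; last by rewrite scale0r.
  by rewrite /eball /= N0 ler01.
exists (r^-1 *: x); last by rewrite scalerA divff // scale1r.
rewrite /eball /= NZ ger0_norm ?invr_ge0 // ler_pdivrMl ?mulr1 //.
by rewrite lt_def rn0.
Qed.

Lemma msum_eq A t : closed A -> A !=set0 -> 0 <= t ->
  msum A (Bl t) = [set z | edist z A <= t].
Proof.
move=> cA A0 t0; apply/seteqP; split => z.
  move=> [a [Aa [b [Bb ->]]]] /=; apply: le_trans (ed_le _ _ _ _ Aa) _.
  by rewrite [a + b]addrC addrK.
move=> /= hz; have [p Ap hp] := nearest_ed z cA A0.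
exists p; split => //; exists (z - p); split; last by rewrite addrC subrK.
by rewrite /Bl /= hp.
Qed.

Lemma N_conv (x y : V) l : 0 <= l <= 1 ->
  N (l *: x + (1 - l) *: y) <= l * N x + (1 - l) * N y.
Proof.
move=> /andP[l0 l1]; apply: le_trans (NT _ _) _.
by rewrite !NZ !ger0_norm // subr_ge0.
Qed.

Lemma convex_B r : convexset (Bl r).
Proof.
move=> x y l hx hy hl; rewrite /Bl /=; have := @N_conv x y l hl.
move: hl => /andP[l0 l1]; rewrite /Bl /= in hx hy.
have h1 : l * N x <= l * r by rewrite ler_wpM2l.
have h2 : (1 - l) * N y <= (1 - l) * r by rewrite ler_wpM2l // subr_ge0.
lra.
Qed.

Lemma convexI A B : convexset A -> convexset B -> convexset (A `&` B).
Proof. by move=> cA cB x y l [] ? ? [] ? ? hl; split; [apply: cA | apply: cB]. Qed.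

Lemma convex_msum A B : convexset A -> convexset B -> convexset (msum A B).
Proof.
move=> cA cB x y l [a [Aa [b [Bb ->]]]] [a' [Aa' [b' [Bb' ->]]]] hl.
exists (l *: a + (1 - l) *: a'); split; first exact: cA.
exists (l *: b + (1 - l) *: b'); split; first exact: cB.
by rewrite !scalerDr; rewrite addrACA.
Qed.

Lemma closed_B r : closed (Bl r).
Proof. exact: closed_Nle (@N_cont R n). Qed.

Lemma psi_pos A t : t != 0 -> psi A t = msum A (Bl t) `&` Bl ((1 - t) / t)
  \/ ~ (0 <= t).
Proof. Abort.

Lemma K0_psi A t : K0 A -> 0 <= t <= 1 -> K0 (psi A t).
Proof.
move=> [cA [cvA A0]] /andP[t0 t1]; rewrite /psi.
have [_|tn0] := eqVneq t 0; first by [].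
have tp : 0 < t by rewrite lt_def tn0.
have r0 : 0 <= (1 - t) / t by rewrite divr_ge0 // subr_ge0.
rewrite ball_eq // ball_eq //; split; [|split].
- apply: closedI; last exact: closed_B.
  rewrite msum_eq //; last by exists 0.
  apply: closed_Nle; apply: ed_cont; by exists 0.
- by apply: convexI; [apply: convex_msum => //; exact: convex_B | exact: convex_B].
- split; last by rewrite /Bl /= N0.
  by exists 0; split => //; exists 0; split; [rewrite /Bl /= N0 | rewrite addr0].
Qed.

End Sets.

Section AW.
Variables (R : realType) (n : nat).
Local Notation V := 'rV[R]_n.
Local Notation N := (@enorm R n).
Local Notation edist := (@Defs.edist R n).
Local Notation msum := (@Defs.msum R n).
Implicit Types (A : set V).

Definition inner A K (j : nat) : set R :=
  [set `|edist x A - edist x K| | x in [set x | N x < j.+1%:R]].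

Lemma ed_self A a : A a -> edist a A = 0.
Proof.
move=> Aa; apply/eqP; rewrite eq_le ed_ge0; last by exists a.
by have := ed_le _ a A a Aa; rewrite subrr N0 => ->.
Qed.

Lemma ed_le0 x A : A 0 -> edist x A <= N x.
Proof. by move=> A0; have := ed_le _ x A 0 A0; rewrite subr0. Qed.

Lemma inner_ub A K j : A 0 -> K 0 -> ubound (inner A K j) (2 * j.+1%:R).
Proof.
move=> A0 K0 _ [x /= hx <-].
have h1 := @ed_le0 x A A0; have h2 := @ed_le0 x K K0.
have h3 := ed_ge0 _ x (ex_intro _ _ A0); have h4 := ed_ge0 _ x (ex_intro _ _ K0).
rewrite ler_norml; apply/andP; split; lra.
Qed.

Lemma inner_ne A K j : inner A K j !=set0.
Proof. by exists (`|edist 0 A - edist 0 K|), 0 => //=; rewrite N0. Qed.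

Definition outer A K : set R :=
  [set Num.min (j.+1%:R)^-1 (sup (inner A K j)) | j in [set: nat]].

Lemma dAW_E A K : dAW A K = sup (outer A K).
Proof. by []. Qed.

Lemma outer_ub A K : ubound (outer A K) 1.
Proof.
move=> _ [j _ <-]; rewrite ge_min; apply/orP; left.
by rewrite invf_le1 // ler1n.
Qed.

Lemma outer_ne A K : outer A K !=set0.
Proof. by exists (Num.min (0.+1%:R)^-1 (sup (inner A K 0))), 0%N. Qed.

Lemma dAW_lt A K (eps : R) (J : nat) : 0 < eps -> (J.+1%:R)^-1 < eps ->
  (forall x, N x < J.+1%:R -> `|edist x A - edist x K| <= eps / 2) ->
  dAW A K < eps.
Proof.
move=> e0 hJ hx.
apply: (@le_lt_trans _ _ (Num.max (eps / 2) (J.+1%:R)^-1)); last first.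
  by rewrite gt_max hJ andbT; lra.
apply: ge_sup; first exact: outer_ne.
move=> _ [j _ <-]; rewrite le_max; case: (leqP j J) => hj.
  apply/orP; left; rewrite ge_min; apply/orP; right.
  apply: ge_sup; first exact: inner_ne.
  move=> _ [x /= hxj <-]; apply: hx; apply: lt_le_trans hxj _.
  by rewrite ler_nat.
apply/orP; right; rewrite ge_min; apply/orP; left.
by rewrite lef_pV2 ?posrE // ler_nat ltnW.
Qed.

Lemma dAW_gt A K (d : R) (j : nat) : A 0 -> K 0 -> dAW A K < d ->
  d <= (j.+1%:R)^-1 ->
  forall x, N x < j.+1%:R -> `|edist x A - edist x K| < d.
Proof.
move=> A0 K0 hd hj x hx.
have hs : has_sup (outer A K) by split; [exact: outer_ne | exists 1; exact: outer_ub].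
have hi : has_sup (inner A K j).
  by split; [exact: inner_ne | exists (2 * j.+1%:R); exact: inner_ub].
have h1 : Num.min (j.+1%:R)^-1 (sup (inner A K j)) < d.
  apply: le_lt_trans hd; rewrite dAW_E; apply: sup_upper_bound => //.
  by exists j.
have h2 : sup (inner A K j) < d.
  move: h1; rewrite gt_min => /orP[h|//]; move: (lt_le_trans h hj).
  by rewrite ltxx.
apply: le_lt_trans h2; apply: sup_upper_bound => //; by exists x.
Qed.

End AW.

Section HH.
Variables (R : realType) (n : nat).
Local Notation V := 'rV[R]_n.
Local Notation N := (@enorm R n).
Local Notation edist := (@Defs.edist R n).
Local Notation msum := (@Defs.msum R n).
Implicit Types (A B X Y : set V).

Definition HH X Y (rho eps : R) :=
  forall x, X x -> N x <= rho -> exists y, Y y /\ N (x - y) <= eps.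

Lemma N_sub_le x y : N (x - y) <= N x + N y.
Proof. by apply: le_trans (NT _ _) _; rewrite NN. Qed.

Lemma N_le_sub x y : N x <= N y + N (x - y).
Proof. by have := NTB x y 0; rewrite !subr0 addrC. Qed.

Lemma ed_from_H X Y M eps : X 0 -> Y !=set0 -> HH X Y (2 * M + 1) eps ->
  forall x, N x <= M -> edist x Y <= edist x X + eps.
Proof.
move=> X0 Y0 hH x hx; apply/ler_addgt0Pr => g g0.
pose g' := Num.min g 1.
have g'0 : 0 < g' by rewrite lt_min g0 ltr01.
have g'1 : g' <= 1 by rewrite ge_min lexx orbT.
have g'g : g' <= g by rewrite ge_min lexx.
have [a Xa ha] := @ed_lt R n x X g' (ex_intro _ _ X0) g'0.
have h1 := @ed_le0 _ _ x X X0.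
have hNa : N a <= 2 * M + 1.
  have := N_le_sub a x; rewrite NB; lra.
have [y [Yy hy]] := hH a Xa hNa.
apply: le_trans (ed_le _ x Y y Yy) _.
have := NTB x a y; lra.
Qed.

Lemma ed_close X Y M eps : X 0 -> Y 0 ->
  HH X Y (2 * M + 1) eps -> HH Y X (2 * M + 1) eps ->
  forall x, N x <= M -> `|edist x X - edist x Y| <= eps.
Proof.
move=> X0 Y0 h1 h2 x hx.
have := @ed_from_H X Y M eps X0 (ex_intro _ _ Y0) h1 x hx.
have := @ed_from_H Y X M eps Y0 (ex_intro _ _ X0) h2 x hx.
rewrite ler_norml; move=> ha hb; apply/andP; split; lra.
Qed.

Lemma H_of_dAW A B (d : R) (j : nat) (rho : R) : A 0 -> B 0 -> dAW A B < d ->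
  d <= (j.+1%:R)^-1 -> rho < j.+1%:R -> HH A B rho (2 * d) /\ HH B A rho (2 * d).
Proof.
move=> A0 B0 hd hj hr.
have key : forall X Y, X 0 -> Y 0 ->
    (forall x, N x < j.+1%:R -> `|edist x X - edist x Y| < d) -> HH X Y rho (2 * d).
  move=> X Y X0 Y0 hXY a Xa ha.
  have := hXY a (le_lt_trans ha hr); rewrite (@ed_self R n X a Xa) sub0r normrN.
  move=> hlt; have d0 : 0 < d by apply: le_lt_trans hlt.
  have [y Yy hy] := @ed_lt R n a Y d (ex_intro _ _ Y0) d0.
  exists y; split => //; have := ler_norm (edist a Y); lra.
split; apply: key => // x hx.
  exact: (@dAW_gt R n A B d j A0 B0 hd hj x hx).
by rewrite distrC; exact: (@dAW_gt R n A B d j A0 B0 hd hj x hx).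
Qed.

End HH.

Section PsiH.
Variables (R : realType) (n : nat).
Local Notation V := 'rV[R]_n.
Local Notation N := (@enorm R n).
Local Notation edist := (@Defs.edist R n).
Local Notation msum := (@Defs.msum R n).
Local Notation Bl := (@Bl R n).
Local Notation HH := (@HH R n).
Implicit Types (A B X Y : set V).

Lemma psi_posE A t : 0 < t -> t <= 1 ->
  psi A t = msum A (Bl t) `&` Bl ((1 - t) / t).
Proof.
move=> t0 t1; have r0 : 0 <= (1 - t) / t by rewrite divr_ge0 ?subr_ge0 // ltW.
by rewrite /psi (gt_eqF t0) !ball_eq // ltW.
Qed.

Lemma psi0E A : psi A 0 = A.
Proof. by rewrite /psi eqxx. Qed.

Lemma H_psi_pos A B t s rho e1 e2 k :
  0 < t -> t <= 1 -> 0 < s -> s <= 1 -> convexset B -> B 0 ->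
  0 <= e1 -> 0 <= k -> HH A B (rho + 1) e1 -> `|t - s| <= e2 ->
  (1 - t) / t - (1 - s) / s <= k ->
  HH (psi A t) (psi B s) rho (2 * (e1 + e2) + k).
Proof.
move=> t0 t1 s0 s1 cvB B0 e10 k0 hAB hts hk.
rewrite (@psi_posE A t t0 t1) (@psi_posE B s s0 s1).
have rs0 : 0 <= (1 - s) / s by rewrite divr_ge0 ?subr_ge0 // ltW.
move=> _ [[a [Aa [b [Bb ->]]]] Bx] hx; rewrite /Bl /= in Bb Bx.
have hNa : N a <= rho + 1.
  have := @N_le_sub R n a (a + b); rewrite opprD addrA subrr sub0r NN; lra.
have [a' [Ba' ha']] := hAB a Aa hNa.
pose b' := (s / t) *: b.
have hb' : N b' <= s.
  have st0 : 0 <= s / t by rewrite divr_ge0 // ltW.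
  rewrite /b' NZ ger0_norm //.
  apply: (le_trans (ler_wpM2l st0 Bb)).
  by rewrite divfK // lt0r_neq0.
have hbb' : N (b - b') <= `|t - s|.
  have -> : b - b' = ((t - s) / t) *: b.
    by rewrite /b' -{1}(scale1r b) -scalerBl; congr (_ *: _); field; exact: lt0r_neq0.
  have ti0 : 0 <= t^-1 by rewrite invr_ge0 ltW.
  rewrite NZ normrM (ger0_norm ti0) -mulrA.
  apply: le_trans (ler_wpM2l (normr_ge0 _) (ler_wpM2l ti0 Bb)) _.
  by rewrite mulVf ?mulr1 // lt0r_neq0.
pose d := a' + b'.
have hd : N (a + b - d) <= e1 + e2.
  have -> : a + b - d = (a - a') + (b - b') by rewrite /d opprD addrACA.
  apply: le_trans (NT _ _) _; lra.
have e20 : 0 <= e2 by apply: le_trans hts.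
case: (leP (N d) ((1 - s) / s)) => hNd.
  exists d; split; last lra.
  split => //; exists a'; split => //; exists b'; split => //.
pose l := (1 - s) / s / N d.
have Nd0 : 0 < N d by apply: le_lt_trans hNd.
have l0 : 0 <= l by rewrite divr_ge0 // ltW.
have l1 : l <= 1 by rewrite ler_pdivrMr // mul1r ltW.
exists (l *: d); split.
  split; last by rewrite /Bl /= NZ ger0_norm // divfK // lt0r_neq0.
  exists (l *: a'); split.
    have := cvB a' 0 l Ba' B0; rewrite l0 l1 => /(_ isT).
    by rewrite scaler0 addr0.
  exists (l *: b'); split; last by rewrite /d scalerDr.
  by rewrite /Bl /= NZ ger0_norm // (le_trans _ hb') // ler_piMl // N_ge0.
have hdl : N (d - l *: d) = N d - (1 - s) / s.
  rewrite -{1}(scale1r d) -scalerBl NZ ger0_norm ?subr_ge0 //.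
  rewrite mulrBl mul1r divfK //; exact: lt0r_neq0.
have := NTB (a + b) d (l *: d); rewrite hdl.
have := @N_le_sub R n d (a + b); rewrite [N (d - _)]NB.
lra.
Qed.

Lemma H_psi0a A B s rho e : 0 <= s -> s <= 1 -> 0 <= e ->
  (s = 0 \/ rho + e <= (1 - s) / s) -> HH A B rho e ->
  HH (psi A 0) (psi B s) rho e.
Proof.
move=> s0 s1 e0 hs hAB; rewrite psi0E.
case: (eqVneq s 0) => [->|sn0]; first by rewrite psi0E.
have sp : 0 < s by rewrite lt_def sn0.
case: hs => [/eqP|hs]; first by rewrite (negbTE sn0).
rewrite (@psi_posE B s sp s1) => x Ax hx.
have [b [Bb hb]] := hAB x Ax hx; exists b; split => //; split.
  exists b; split => //; exists 0; split; last by rewrite addr0.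
  by rewrite /Bl /= N0.
rewrite /Bl /=; have := @N_le_sub R n b x; rewrite NB; lra.
Qed.

Lemma H_psi0b A B s rho e : 0 <= s -> s <= 1 -> 0 <= e ->
  HH B A (rho + 1) e -> HH (psi B s) (psi A 0) rho (e + s).
Proof.
move=> s0 s1 e0 hBA; rewrite psi0E.
case: (eqVneq s 0) => [->|sn0].
  rewrite psi0E addr0 => x Bx hx; apply: hBA => //; lra.
have sp : 0 < s by rewrite lt_def sn0.
rewrite (@psi_posE B s sp s1) => _ [[b [Bb [c [Bc ->]]]] _] hx.
rewrite /Bl /= in Bc.
have hNb : N b <= rho + 1.
  have := @N_le_sub R n b (b + c); rewrite opprD addrA subrr sub0r NN; lra.
have [a [Aa ha]] := hBA b Bb hNb; exists a; split => //.
have -> : b + c - a = (b - a) + c by rewrite addrAC.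
apply: le_trans (NT _ _) _; lra.
Qed.

End PsiH.

Section Final.
Variables (R : realType) (n : nat).
Local Notation V := 'rV[R]_n.
Local Notation N := (@enorm R n).
Local Notation edist := (@Defs.edist R n).
Local Notation msum := (@Defs.msum R n).
Local Notation Bl := (@Bl R n).
Local Notation HH := (@HH R n).
Implicit Types (A B X Y : set V).

Lemma HH_mono X Y r r' e e' : HH X Y r e -> r' <= r -> e <= e' -> HH X Y r' e'.
Proof.
move=> h hr he x Xx hx; have [y [Yy hy]] := h x Xx (le_trans hx hr).
by exists y; split => //; apply: le_trans he.
Qed.

Lemma psi_big A t : K0 A -> (Num.sqrt 5 - 1) / 2 <= t < 1 ->
  psi A t = sscale ((1 - t) / t) (@eball R n).
Proof.
move=> [_ [_ A0]] /andP[ht t1].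
have s5 : Num.sqrt 5 ^+ 2 = 5 :> R by rewrite sqr_sqrtr.
have s0 : 0 <= Num.sqrt 5 :> R by exact: sqrtr_ge0.
have s1 : 1 < Num.sqrt 5 :> R.
  rewrite -(ltr_pXn2r (n:=2)) ?nnegrE // s5 expr1n; lra.
have tp : 0 < t by apply: lt_le_trans ht; lra.
have r0 : 0 <= (1 - t) / t by rewrite divr_ge0 ?subr_ge0 // ltW.
have rt : (1 - t) / t <= t.
  rewrite ler_pdivrMr //; nra.
rewrite /psi (gt_eqF tp) setIidr //.
rewrite !ball_eq // ?ltW // => x hx; exists 0; split => //; exists x; split.
  by rewrite /Bl /=; apply: le_trans rt; exact: hx.
by rewrite add0r.
Qed.

Lemma r_diff (t s d : R) : 0 < t -> t / 2 < s -> `|t - s| <= d ->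
  (1 - t) / t - (1 - s) / s <= 2 * d / t ^+ 2.
Proof.
move=> t0 hs hd.
have s0 : 0 < s by apply: le_lt_trans hs; rewrite divr_ge0 // ltW.
have E : (1 - t) / t - (1 - s) / s = (s - t) / (t * s).
  by field; apply/andP; split; exact: lt0r_neq0.
rewrite E ler_pdivrMr ?mulr_gt0 //.
have E2 : 2 * d / t ^+ 2 * (t * s) = d * (2 * s / t).
  by field; exact: lt0r_neq0.
rewrite E2.
have h1 : 1 <= 2 * s / t by rewrite ler_pdivlMr // mul1r; lra.
have d0 : 0 <= d by apply: le_trans hd.
have := ler_norm (s - t); rewrite distrC => h2.
have : d <= d * (2 * s / t) by rewrite ler_peMr.
lra.
Qed.

Lemma r_diff2 (t s d : R) : 0 < t -> t / 2 < s -> `|t - s| <= d ->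
  (1 - s) / s - (1 - t) / t <= 2 * d / t ^+ 2.
Proof.
move=> t0 hs hd.
have s0 : 0 < s by apply: le_lt_trans hs; rewrite divr_ge0 // ltW.
have E : (1 - s) / s - (1 - t) / t = (t - s) / (t * s).
  by field; apply/andP; split; exact: lt0r_neq0.
rewrite E ler_pdivrMr ?mulr_gt0 //.
have E2 : 2 * d / t ^+ 2 * (t * s) = d * (2 * s / t).
  by field; exact: lt0r_neq0.
rewrite E2.
have h1 : 1 <= 2 * s / t by rewrite ler_pdivlMr // mul1r; lra.
have d0 : 0 <= d by apply: le_trans hd.
have := ler_norm (t - s) => h2.
have : d <= d * (2 * s / t) by rewrite ler_peMr.
lra.
Qed.

Lemma trunc_lt (x : R) : 0 <= x -> x < (Num.trunc x).+1%:R.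
Proof. by move=> x0; rewrite -truncn_lt_nat // ltnSn. Qed.

Lemma cont A t : K0 A -> 0 <= t <= 1 ->
  forall eps : R, 0 < eps -> exists2 delta : R, 0 < delta &
       forall (B : set V) (s : R), K0 B -> 0 <= s <= 1 ->
         dAW A B < delta -> `|t - s| < delta ->
         dAW (psi A t) (psi B s) < eps.
Proof.
move=> hA /andP[t0 t1] eps e0.
have [cA [cvA A0]] := hA.
pose J := Num.trunc (eps^-1).
have hJ : (J.+1%:R)^-1 < eps.
  have ei : 0 <= eps^-1 by rewrite invr_ge0 ltW.
  have h := @trunc_lt _ ei.
  by rewrite -[eps]invrK ltf_pV2 ?posrE ?invr_gt0 // ltr0n.
pose M : R := J.+1%:R.
have M1 : 1 <= M by rewrite /M ler1n.
pose rho := 2 * M + 1.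
pose j := Num.trunc (rho + 2).
have hj : rho + 2 < j.+1%:R by apply: (@trunc_lt (rho + 2)); rewrite /rho; lra.
pose d0 : R := (j.+1%:R)^-1.
have d00 : 0 < d0 by rewrite /d0 invr_gt0 ltr0n.
have fin : forall B s, K0 B -> 0 <= s <= 1 ->
    HH (psi A t) (psi B s) rho (eps / 2) -> HH (psi B s) (psi A t) rho (eps / 2) ->
    dAW (psi A t) (psi B s) < eps.
  move=> B s hB hs h1 h2.
  have [_ [_ P0]] := @K0_psi R n A t hA (introT andP (conj t0 t1)).
  have [_ [_ Q0]] := @K0_psi R n B s hB hs.
  apply: (@dAW_lt R n _ _ eps J e0 hJ) => x hx.
  exact: (@ed_close R n _ _ M (eps / 2) P0 Q0 h1 h2 x (ltW hx)).
case: (eqVneq t 0) => [t00|tn0].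
  pose de := Num.min d0 (Num.min (eps / 6) (rho + 2)^-1).
  have r20 : 0 < rho + 2 by rewrite /rho; lra.
  have de0 : 0 < de by rewrite !lt_min d00 invr_gt0 r20 /=; lra.
  have ded0 : de <= d0 by rewrite ge_min lexx.
  have dee : de <= eps / 6 by rewrite !ge_min lexx /= orbT.
  have der : de <= (rho + 2)^-1 by rewrite !ge_min lexx /= !orbT.
  exists de => // B s hB /andP[s0 s1] hd hts.
  have [cB [cvB B0]] := hB.
  have [hAB hBA] := @H_of_dAW R n A B de j (rho + 1) A0 B0 hd
    (le_trans ded0 (lexx _)) ltac:(lra).
  have sd : s < de by move: hts; rewrite t00 sub0r normrN ger0_norm.
  apply: fin => //; first by rewrite s0 s1.
  - rewrite t00; apply: (@HH_mono _ _ rho rho (2 * de) (eps / 2)); [|exact: lexx|lra].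
    apply: H_psi0a => //; first lra.
      case: (eqVneq s 0) => [->|sn0]; [by left | right].
      have sp : 0 < s by rewrite lt_def sn0 s0.
      have h : s * (rho + 2) < 1.
        by rewrite -ltr_pdivlMr // mul1r; apply: lt_le_trans der.
      have h5 : de * (rho + 2) <= 1 by rewrite -ler_pdivlMr // mul1r.
      have h6 : 5 * de <= 1 by rewrite /rho in h5; nra.
      have h7 : de * s <= s / 5 by nra.
      rewrite ler_pdivlMr //; nra.
    apply: HH_mono hAB _ (lexx _); lra.
  - rewrite t00; apply: (@HH_mono _ _ rho rho (2 * de + s) (eps / 2)); [|exact: lexx|lra].
    by apply: H_psi0b => //; lra.
have tp : 0 < t by rewrite lt_def tn0 t0.
pose de := Num.min d0 (Num.min (t / 2) (eps * t ^+ 2 / (12 * t ^+ 2 + 4))).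
have t20 : 0 < t ^+ 2 by rewrite exprn_gt0.
have de0 : 0 < de.
  rewrite !lt_min d00 divr_gt0 //= divr_gt0 ?mulr_gt0 //; lra.
have ded0 : de <= d0 by rewrite ge_min lexx.
have det : de <= t / 2 by rewrite !ge_min lexx /= orbT.
have dee : de <= eps * t ^+ 2 / (12 * t ^+ 2 + 4) by rewrite !ge_min lexx /= !orbT.
exists de => // B s hB /andP[s0 s1] hd hts.
have [cB [cvB B0]] := hB.
have [hAB hBA] := @H_of_dAW R n A B de j (rho + 1) A0 B0 hd
  (le_trans ded0 (lexx _)) ltac:(lra).
have hs2 : t / 2 < s.
  have := ler_norm (t - s); lra.
have sp : 0 < s by apply: le_lt_trans hs2; rewrite divr_ge0 // ltW.
have k0 : 0 <= 2 * de / t ^+ 2 by rewrite divr_ge0 //; lra.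
have err : 2 * (2 * de + de) + 2 * de / t ^+ 2 <= eps / 2.
  have E : 2 * (2 * de + de) + 2 * de / t ^+ 2 = de * (12 * t ^+ 2 + 4) / (2 * t ^+ 2).
    by field; exact: lt0r_neq0.
  rewrite E ler_pdivrMr ?mulr_gt0 //.
  move: dee; rewrite ler_pdivlMr; last lra.
  move=> h; apply: le_trans h _; rewrite mulrA; lra.
apply: fin => //; first by rewrite s0 s1.
- apply: (@HH_mono _ _ rho rho (2 * (2 * de + de) + 2 * de / t ^+ 2) (eps / 2)) => //.
  apply: H_psi_pos => //.
  all: try lra.
  all: try exact: ltW.
  all: try by apply: r_diff => //; exact: ltW.
  all: idtac.
- apply: (@HH_mono _ _ rho rho (2 * (2 * de + de) + 2 * de / t ^+ 2) (eps / 2)) => //.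
  apply: H_psi_pos => //.
  all: try lra.
  all: try by rewrite distrC; exact: ltW.
  all: try by apply: r_diff2 => //; exact: ltW.
  all: idtac.
Qed.

End Final.

Theorem lemma4p1 (R : realType) (n : nat) (hn : (1 < n)%N) :
  (* psi maps K_0^n x [0,1] into K_0^n *)
  (forall (A : set 'rV[R]_n) (t : R), K0 A -> 0 <= t <= 1 -> K0 (psi A t)) /\
  (* psi is continuous for d_AW (product topology on K_0^n x [0,1]) *)
  (forall (A : set 'rV[R]_n) (t : R), K0 A -> 0 <= t <= 1 ->
     forall eps : R, 0 < eps -> exists2 delta : R, 0 < delta &
       forall (B : set 'rV[R]_n) (s : R), K0 B -> 0 <= s <= 1 ->
         dAW A B < delta -> `|t - s| < delta ->
         dAW (psi A t) (psi B s) < eps) /\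
  (* for t in [(sqrt 5 - 1)/2, 1), psi(A,t) = ((1-t)/t) B *)
  (forall (A : set 'rV[R]_n) (t : R), K0 A ->
     (Num.sqrt 5 - 1) / 2 <= t < 1 ->
     psi A t = sscale ((1 - t) / t) (@eball R n)).
Proof.
split; [|split].
- by move=> A t hA ht; exact: K0_psi.
- by move=> A t hA ht; exact: cont.
- by move=> A t hA ht; exact: psi_big.
Qed.
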